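(* Let $\mathbb G$ be a strict 2-group. Then $\mathbb G$ is split if and only if there exists a normalized set-theoretic section $s:\pi_0(\mathbb G)\to\mathsf G_0$ of $p$ such that the map $\hat s:\pi_0(\mathbb G)\times\pi_0(\mathbb G)\to K_0$, $\hat s([x],[x'])=s[x]\otimes s[x']\otimes s[x\otimes x']^{-1}$, admits a normalized lifting $\psi_s:\pi_0(\mathbb G)\times\pi_0(\mathbb G)\to\mathsf H_0$ satisfying, for all $[x],[x'],[x'']\in\pi_0(\mathbb G)$, $$\psi_s([x],[x'])\cdot\psi_s([x\otimes x'],[x''])=\big([x]\lhd_s\psi_s([x'],[x''])\big)\cdot\psi_s([x],[x'\otimes x'']).$$
   Context: A strict 2-group is a monoidal groupoid $(\mathcal G,\otimes,e)$ with trivial associator and unitors in which every object $x$ has a strict inverse $x^{-1}$ ($x\otimes x^{-1}=e=x^{-1}\otimes x$). $\mathsf G_0$ is the group of objects under $\otimes$; $\pi_0(\mathbb G)$ is the group of isomorphism classes with $[x][y]=[x\otimes y]$, and $p:\mathsf G_0\to\pi_0(\mathbb G)$ the projection; $K_0=\ker p$ is the set of objects isomorphic to $e$. $\mathsf H_0$ is the group of all morphisms of $\mathcal G$ with domain $e$, with product $f\cdot f'=f\otimes f'$; sending a morphism to its codomain is a homomorphism $t:\mathsf H_0\to\mathsf G_0$ with image $K_0$. A section $s$ is normalized if $s[e]=e$. A lifting of $\hat s$ is a map $\psi_s$ with $t\circ\psi_s=\hat s$; it is normalized if $\psi_s([e],[x])=\psi_s([x],[e])=id_e$ for all $[x]$.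 For $f\in\mathsf H_0$, $[x]\lhd_s f:=id_{s[x]}\otimes f\otimes id_{s[x]^{-1}}$. A 2-group is split if it is equivalent (monoidal functor with pseudo-inverse up to monoidal natural isomorphism) to an elementary 2-group $\mathsf A[1]\rtimes\mathsf G[0]$, for some group $\mathsf G$ and left $\mathsf G$-module $\mathsf A$: the strict 2-group with objects the elements of $\mathsf G$, morphisms $(a,g):g\to g$, composition $(a',g)\circ(a,g)=(a'+a,g)$, tensor $g\otimes g'=gg'$, $(a,g)\otimes(a',g')=(a+g\lhd a',gg')$. *)

(* Defs.v *)
Set Implicit Arguments.

(* Morphisms form one type [Mor] with domain/codomain maps; composition,
   inverse and tensor are total functions whose values are only constrained
   (by the axioms) on composable pairs.  [comp g f] is  g o f. *)
Record TwoGroupData := {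
  Ob : Type;
  Mor : Type;
  dom : Mor -> Ob;
  cod : Mor -> Ob;
  idm : Ob -> Mor;
  comp : Mor -> Mor -> Mor;
  minv : Mor -> Mor;
  tens : Ob -> Ob -> Ob;
  tensm : Mor -> Mor -> Mor;
  unit : Ob;
  oinv : Ob -> Ob }.

Arguments dom {t} _.
Arguments cod {t} _.
Arguments idm {t} _.
Arguments comp {t} _ _.
Arguments minv {t} _.
Arguments tens {t} _ _.
Arguments tensm {t} _ _.
Arguments oinv {t} _.

Record IsStrict2Group (G : TwoGroupData) : Prop := {
  dom_id : forall x : Ob G, dom (idm x) = x;
  cod_id : forall x : Ob G, cod (idm x) = x;
  dom_comp : forall f g : Mor G, cod f = dom g -> dom (comp g f) = dom f;
  cod_comp : forall f g : Mor G, cod f = dom g -> cod (comp g f) = cod g;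
  comp_id_r : forall f : Mor G, comp f (idm (dom f)) = f;
  comp_id_l : forall f : Mor G, comp (idm (cod f)) f = f;
  comp_assoc : forall f g h : Mor G, cod f = dom g -> cod g = dom h ->
      comp h (comp g f) = comp (comp h g) f;
  dom_minv : forall f : Mor G, dom (minv f) = cod f;
  cod_minv : forall f : Mor G, cod (minv f) = dom f;
  minv_l : forall f : Mor G, comp (minv f) f = idm (dom f);
  minv_r : forall f : Mor G, comp f (minv f) = idm (cod f);
  dom_tensm : forall f g : Mor G, dom (tensm f g) = tens (dom f) (dom g);
  cod_tensm : forall f g : Mor G, cod (tensm f g) = tens (cod f) (cod g);
  tensm_id : forall x y : Ob G, tensm (idm x) (idm y) = idm (tens x y);
  tensm_comp : forall f f' g g' : Mor G, cod f = dom f' -> cod g = dom g' ->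
      tensm (comp f' f) (comp g' g) = comp (tensm f' g') (tensm f g);
  tens_assoc : forall x y z : Ob G, tens x (tens y z) = tens (tens x y) z;
  tens_unit_l : forall x : Ob G, tens (unit G) x = x;
  tens_unit_r : forall x : Ob G, tens x (unit G) = x;
  tensm_assoc : forall f g h : Mor G, tensm f (tensm g h) = tensm (tensm f g) h;
  tensm_unit_l : forall f : Mor G, tensm (idm (unit G)) f = f;
  tensm_unit_r : forall f : Mor G, tensm f (idm (unit G)) = f;
  tens_oinv_r : forall x : Ob G, tens x (oinv x) = unit G;
  tens_oinv_l : forall x : Ob G, tens (oinv x) x = unit G }.

(* x and y are isomorphic, i.e. [x] = [y] in pi_0. *)
Definition iso {G : TwoGroupData} (x y : Ob G) : Prop :=
  exists f : Mor G, dom f = x /\ cod f = y.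

Record MonFunData (G H : TwoGroupData) := {
  fo : Ob G -> Ob H;
  fm : Mor G -> Mor H;
  fmu : Ob G -> Ob G -> Mor H;
  feps : Mor H }.

Record IsMonFun (G H : TwoGroupData) (F : MonFunData G H) : Prop := {
  mf_dom : forall f, dom (fm F f) = fo F (dom f);
  mf_cod : forall f, cod (fm F f) = fo F (cod f);
  mf_id : forall x, fm F (idm x) = idm (fo F x);
  mf_comp : forall f g, cod f = dom g -> fm F (comp g f) = comp (fm F g) (fm F f);
  mf_mu_dom : forall x y, dom (fmu F x y) = tens (fo F x) (fo F y);
  mf_mu_cod : forall x y, cod (fmu F x y) = fo F (tens x y);
  mf_mu_nat : forall f g,
      comp (fmu F (cod f) (cod g)) (tensm (fm F f) (fm F g))
      = comp (fm F (tensm f g)) (fmu F (dom f) (dom g));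
  mf_eps_dom : dom (feps F) = unit H;
  mf_eps_cod : cod (feps F) = fo F (unit G);
  mf_assoc : forall x y z,
      comp (fmu F (tens x y) z) (tensm (fmu F x y) (idm (fo F z)))
      = comp (fmu F x (tens y z)) (tensm (idm (fo F x)) (fmu F y z));
  mf_unit_l : forall x,
      comp (fmu F (unit G) x) (tensm (feps F) (idm (fo F x))) = idm (fo F x);
  mf_unit_r : forall x,
      comp (fmu F x (unit G)) (tensm (idm (fo F x)) (feps F)) = idm (fo F x) }.

Definition mfcomp (G H L : TwoGroupData) (F : MonFunData G H) (K : MonFunData H L)
  : MonFunData G L :=
  {| fo := fun x => fo K (fo F x);
     fm := fun f => fm K (fm F f);
     fmu := fun x y => comp (fm K (fmu F x y)) (fmu K (fo F x) (fo F y));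
     feps := comp (fm K (feps F)) (feps K) |}.

Definition mfid (G : TwoGroupData) : MonFunData G G :=
  {| fo := fun x => x; fm := fun f => f;
     fmu := fun x y => idm (tens x y); feps := idm (unit G) |}.

(* Monoidal natural transformation a : F => F' (automatically invertible,
   since all morphisms are invertible). *)
Record IsMonNat (G H : TwoGroupData) (F F' : MonFunData G H) (a : Ob G -> Mor H)
  : Prop := {
  mn_dom : forall x, dom (a x) = fo F x;
  mn_cod : forall x, cod (a x) = fo F' x;
  mn_nat : forall f, comp (a (cod f)) (fm F f) = comp (fm F' f) (a (dom f));
  mn_mu : forall x y,
      comp (a (tens x y)) (fmu F x y) = comp (fmu F' x y) (tensm (a x) (a y));
  mn_eps : comp (a (unit G)) (feps F) = feps F' }.

Definition Equivalent (G H : TwoGroupData) : Prop :=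
  exists (F : MonFunData G H) (F' : MonFunData H G),
    IsMonFun F /\ IsMonFun F' /\
    (exists a, IsMonNat (mfcomp F F') (mfid G) a) /\
    (exists b, IsMonNat (mfcomp F' F) (mfid H) b).

Record Group := {
  gcar : Type;
  gmul : gcar -> gcar -> gcar;
  gone : gcar;
  ginv : gcar -> gcar;
  gmulA : forall x y z, gmul x (gmul y z) = gmul (gmul x y) z;
  gmul1l : forall x, gmul gone x = x;
  gmul1r : forall x, gmul x gone = x;
  gmulVl : forall x, gmul (ginv x) x = gone;
  gmulVr : forall x, gmul x (ginv x) = gone }.

Record GModule (Gr : Group) := {
  mcar : Type;
  madd : mcar -> mcar -> mcar;
  mzero : mcar;
  mopp : mcar -> mcar;
  maddA : forall a b c, madd a (madd b c) = madd (madd a b) c;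
  maddC : forall a b, madd a b = madd b a;
  madd0 : forall a, madd a mzero = a;
  maddN : forall a, madd a (mopp a) = mzero;
  act : gcar Gr -> mcar -> mcar;
  actD : forall g a b, act g (madd a b) = madd (act g a) (act g b);
  act1 : forall a, act (gone Gr) a = a;
  actM : forall g h a, act (gmul Gr g h) a = act g (act h a) }.

(* The elementary 2-group  A[1] x| Gr[0]. Morphisms (a,g) : g -> g. *)
Definition elementary (Gr : Group) (A : GModule Gr) : TwoGroupData :=
  {| Ob := gcar Gr;
     Mor := (mcar A * gcar Gr)%type;
     dom := fun p => snd p;
     cod := fun p => snd p;
     idm := fun g => (mzero A, g);
     comp := fun p' p => (madd A (fst p') (fst p), snd p);
     minv := fun p => (mopp A (fst p), snd p);
     tens := gmul Gr;
     tensm := fun p p' => (madd A (fst p) (act A (snd p) (fst p')),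
                           gmul Gr (snd p) (snd p'));
     unit := gone Gr;
     oinv := ginv Gr |}.

Definition is_split (G : TwoGroupData) : Prop :=
  exists (Gr : Group) (A : GModule Gr), Equivalent G (elementary A).

(* Maps out of pi_0(G) are encoded as functions on objects that are constant
   on isomorphism classes. *)
Definition shat {G : TwoGroupData} (s : Ob G -> Ob G) (x x' : Ob G) : Ob G :=
  tens (tens (s x) (s x')) (oinv (s (tens x x'))).

Definition lact {G : TwoGroupData} (s : Ob G -> Ob G) (x : Ob G) (f : Mor G) : Mor G :=
  tensm (tensm (idm (s x)) f) (idm (oinv (s x))).

(* Main.v *)
Require Import Defs.
From Stdlib Require Import ProofIrrelevance ClassicalEpsilon.

Section Main.
Variable G : TwoGroupData.
Variable HG : IsStrict2Group G.

Local Notation e := (unit G).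

Lemma tA (x y z : Ob G) : tens (tens x y) z = tens x (tens y z).
Proof. symmetry; apply (tens_assoc HG). Qed.
Lemma tUl (x : Ob G) : tens e x = x. Proof. apply (tens_unit_l HG). Qed.
Lemma tUr (x : Ob G) : tens x e = x. Proof. apply (tens_unit_r HG). Qed.
Lemma tVr (x : Ob G) : tens x (oinv x) = e. Proof. apply (tens_oinv_r HG). Qed.
Lemma tVl (x : Ob G) : tens (oinv x) x = e. Proof. apply (tens_oinv_l HG). Qed.
Lemma canc1 (x y : Ob G) : tens x (tens (oinv x) y) = y.
Proof. rewrite <- tA, tVr, tUl; reflexivity. Qed.
Lemma canc2 (x y : Ob G) : tens (oinv x) (tens x y) = y.
Proof. rewrite <- tA, tVl, tUl; reflexivity. Qed.
Lemma inv_uniq (x y : Ob G) : tens x y = e -> y = oinv x.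
Proof. intro H. rewrite <- (canc2 x y), H, tUr. reflexivity. Qed.
Lemma oinv_e : oinv e = e.
Proof. symmetry; apply inv_uniq, tUl. Qed.
Lemma oinvK (x : Ob G) : oinv (oinv x) = x.
Proof. symmetry; apply inv_uniq, tVl. Qed.
Lemma oinv_tens (x y : Ob G) : oinv (tens x y) = tens (oinv y) (oinv x).
Proof. symmetry; apply inv_uniq. rewrite tA, canc1, tVr. reflexivity. Qed.

Lemma dI (x : Ob G) : dom (idm x) = x. Proof. apply (dom_id HG). Qed.
Lemma cI (x : Ob G) : cod (idm x) = x. Proof. apply (cod_id HG). Qed.
Lemma dT (f g : Mor G) : dom (tensm f g) = tens (dom f) (dom g). Proof. apply (dom_tensm HG). Qed.
Lemma cT (f g : Mor G) : cod (tensm f g) = tens (cod f) (cod g). Proof. apply (cod_tensm HG). Qed.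
Lemma dV (f : Mor G) : dom (minv f) = cod f. Proof. apply (dom_minv HG). Qed.
Lemma cV (f : Mor G) : cod (minv f) = dom f. Proof. apply (cod_minv HG). Qed.
Lemma dC (f g : Mor G) : cod f = dom g -> dom (comp g f) = dom f. Proof. apply (dom_comp HG). Qed.
Lemma cC (f g : Mor G) : cod f = dom g -> cod (comp g f) = cod g. Proof. apply (cod_comp HG). Qed.

End Main.

Global Hint Rewrite tA tUl tUr tVr tVl canc1 canc2 oinv_e oinvK oinv_tens using assumption : objdb.
Global Hint Rewrite dI dT cI cT dV cV using assumption : dcdb.

Ltac dcn :=
  repeat first
   [ progress (autorewrite with dcdb)
   | rewrite dC; [ | assumption | dcs ]
   | rewrite cC; [ | assumption | dcs ]
   | match goal with H : dom ?f = _ |- context[dom ?f] => rewrite H end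
   | match goal with H : cod ?f = _ |- context[cod ?f] => rewrite H end ]
with dcs :=
  dcn; autorewrite with objdb; first [assumption | reflexivity | congruence].

Section Main.
Variable G : TwoGroupData.
Variable HG : IsStrict2Group G.
Local Notation e := (unit G).

Lemma cid_r' (f : Mor G) x : dom f = x -> comp f (idm x) = f.
Proof. intros <-; apply (comp_id_r HG). Qed.
Lemma cid_l' (f : Mor G) x : cod f = x -> comp (idm x) f = f.
Proof. intros <-; apply (comp_id_l HG). Qed.
Lemma cA (f g h : Mor G) : cod f = dom g -> cod g = dom h -> comp h (comp g f) = comp (comp h g) f.
Proof. apply (comp_assoc HG). Qed.
Lemma TC (f f' g g' : Mor G) : cod f = dom f' -> cod g = dom g' ->
  tensm (comp f' f) (comp g' g) = comp (tensm f' g') (tensm f g).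
Proof. apply (tensm_comp HG). Qed.
Lemma TI (x y : Ob G) : tensm (idm x) (idm y) = idm (tens x y). Proof. apply (tensm_id HG). Qed.
Lemma TA (f g h : Mor G) : tensm (tensm f g) h = tensm f (tensm g h).
Proof. symmetry; apply (tensm_assoc HG). Qed.
Lemma TUl (f : Mor G) : tensm (idm e) f = f. Proof. apply (tensm_unit_l HG). Qed.
Lemma TUr (f : Mor G) : tensm f (idm e) = f. Proof. apply (tensm_unit_r HG). Qed.
Lemma Vl (f : Mor G) : comp (minv f) f = idm (dom f). Proof. apply (minv_l HG). Qed.
Lemma Vr (f : Mor G) : comp f (minv f) = idm (cod f). Proof. apply (minv_r HG). Qed.

Lemma Vl' (f g : Mor G) : cod g = dom f -> comp (minv f) (comp f g) = g.
Proof. intro H. rewrite cA by dcs. rewrite Vl. apply cid_l'; auto. Qed.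
Lemma Vr' (f g : Mor G) : cod g = cod f -> comp f (comp (minv f) g) = g.
Proof. intro H. rewrite cA by dcs. rewrite Vr. apply cid_l'; auto. Qed.

Lemma inv_unique (f k : Mor G) : cod k = dom f -> comp f k = idm (cod f) -> k = minv f.
Proof.
  intros H1 H2.
  rewrite <- (cid_r' (minv f) (cod f)) by dcs.
  rewrite <- H2. rewrite Vl'; auto.
Qed.

Lemma minvK (f : Mor G) : minv (minv f) = f.
Proof. symmetry. apply inv_unique; [dcs|]. rewrite Vl. dcs. Qed.
Lemma minv_id (x : Ob G) : minv (idm x) = idm x.
Proof. symmetry. apply inv_unique; [dcs|]. rewrite cid_l'; dcs. Qed.
Lemma minv_comp (f g : Mor G) : cod f = dom g -> minv (comp g f) = comp (minv f) (minv g).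
Proof.
  intro H. symmetry. apply inv_unique; [dcs|].
  rewrite <- cA by dcs. rewrite Vr' by dcs. rewrite Vr. f_equal. dcs.
Qed.
Lemma minv_T (f g : Mor G) : minv (tensm f g) = tensm (minv f) (minv g).
Proof.
  symmetry. apply inv_unique; [dcs|].
  rewrite <- TC by dcs. rewrite !Vr, TI. f_equal. dcs.
Qed.

Lemma whl (f g : Mor G) : tensm f g = comp (tensm f (idm (cod g))) (tensm (idm (dom f)) g).
Proof. rewrite <- TC by dcs. rewrite cid_r', cid_l'; auto. Qed.
Lemma whr (f g : Mor G) : tensm f g = comp (tensm (idm (cod f)) g) (tensm f (idm (dom g))).
Proof. rewrite <- TC by dcs. rewrite cid_r', cid_l'; auto. Qed.
Lemma Kl (f g : Mor G) : dom f = e -> tensm f g = comp (tensm f (idm (cod g))) g.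
Proof. intro H. rewrite whl, H, TUl. reflexivity. Qed.
Lemma Kl' (f g : Mor G) : cod f = e -> tensm f g = comp g (tensm f (idm (dom g))).
Proof. intro H. rewrite whr, H, TUl. reflexivity. Qed.
Lemma Kr (f g : Mor G) : dom g = e -> tensm f g = comp (tensm (idm (cod f)) g) f.
Proof. intro H. rewrite whr, H, TUr. reflexivity. Qed.
Lemma Kr' (f g : Mor G) : cod g = e -> tensm f g = comp f (tensm (idm (dom f)) g).
Proof. intro H. rewrite whl, H, TUr. reflexivity. Qed.

Lemma EH1 (a b : Mor G) : dom a = e -> cod b = e -> tensm a b = comp a b.
Proof. intros H1 H2. rewrite Kl by auto. rewrite H2, TUr. reflexivity. Qed.
Lemma EH2 (a b : Mor G) : cod a = e -> dom b = e -> tensm a b = comp b a.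
Proof. intros H1 H2. rewrite Kr by auto. rewrite H1, TUl. reflexivity. Qed.
Lemma EH (a b : Mor G) : dom a = e -> cod a = e -> dom b = e -> cod b = e -> comp a b = comp b a.
Proof. intros. rewrite <- EH1, EH2; auto. Qed.

Lemma central (a m : Mor G) : dom a = e -> cod a = e ->
  comp (tensm a (idm (cod m))) m = comp m (tensm a (idm (dom m))).
Proof. intros. rewrite <- Kl, <- Kl'; auto. Qed.

Lemma comp_inj_l (f f' g : Mor G) : cod f = dom g -> cod f' = dom g ->
  comp g f = comp g f' -> f = f'.
Proof. intros H1 H2 H. rewrite <- (Vl' g f), <- (Vl' g f') by auto. rewrite H; reflexivity. Qed.
Lemma comp_inj_r (f g g' : Mor G) : cod f = dom g -> cod f = dom g' ->
  comp g f = comp g' f -> g = g'.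
Proof.
  intros H1 H2 H.
  assert (E: forall h, cod f = dom h -> comp (comp h f) (minv f) = h).
  { intros h Hh. rewrite <- cA by dcs. rewrite Vr, Hh. apply cid_r'; auto. }
  rewrite <- (E g), <- (E g') by auto. rewrite H; reflexivity.
Qed.
Lemma T_inj (f f' : Mor G) (x : Ob G) : tensm f (idm x) = tensm f' (idm x) -> f = f'.
Proof.
  intro H. rewrite <- (TUr f), <- (TUr f'), <- (tVr _ HG x), <- TI, <- !TA, H. reflexivity.
Qed.

End Main.

Global Hint Rewrite TI TUl TUr minv_id minvK minv_T using assumption : mordb.

Section More.
Variable G : TwoGroupData.
Variable HG : IsStrict2Group G.
Lemma TI3 (x y : Ob G) (f : Mor G) : tensm (idm x) (tensm (idm y) f) = tensm (idm (tens x y)) f.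
Proof. rewrite <- TA, TI; auto. Qed.
End More.
Global Hint Rewrite TA TI TI3 TUl TUr using assumption : tadb.
Ltac tn := autorewrite with tadb dcdb objdb.
Ltac cra := repeat (rewrite <- cA by dcs).
Section More2.
Variable G : TwoGroupData.
Variable HG : IsStrict2Group G.
Lemma TC' (a b c d r : Mor G) : cod c = dom a -> cod d = dom b -> cod r = tens (dom c) (dom d) ->
  comp (tensm a b) (comp (tensm c d) r) = comp (tensm (comp a c) (comp b d)) r.
Proof. intros. rewrite cA by dcs. rewrite <- TC by auto. reflexivity. Qed.
End More2.

Section Bridge.
Variable G : TwoGroupData.
Variable HG : IsStrict2Group G.
Local Notation e := (unit G).
Variable s : Ob G -> Ob G.
Variable psi : Ob G -> Ob G -> Mor G.
Hypothesis psid : forall x y, dom (psi x y) = e.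
Hypothesis psic : forall x y, cod (psi x y) = tens (tens (s x) (s y)) (oinv (s (tens x y))).
Hint Rewrite psid psic : dcdb.

Definition Phi x y := tensm (psi x y) (idm (s (tens x y))).

Lemma bridge_L x y z :
  comp (tensm (Phi x y) (idm (s z))) (Phi (tens x y) z)
  = tensm (tensm (psi x y) (psi (tens x y) z)) (idm (s (tens (tens x y) z))).
Proof.
  transitivity (tensm (psi x y) (Phi (tens x y) z)).
  - rewrite (Kl _ HG (psi x y) (Phi (tens x y) z)) by dcs.
    f_equal. unfold Phi at 1. rewrite TA, TI by auto. f_equal. f_equal. unfold Phi. dcs.
  - unfold Phi. rewrite TA by auto. reflexivity.
Qed.

Lemma bridge_R x y z :
  comp (tensm (idm (s x)) (Phi y z)) (Phi x (tens y z))
  = tensm (tensm (lact s x (psi y z)) (psi x (tens y z))) (idm (s (tens x (tens y z)))).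
Proof.
  transitivity (tensm (lact s x (psi y z)) (Phi x (tens y z))).
  - rewrite (Kl _ HG (lact s x (psi y z)) (Phi x (tens y z))) by (unfold lact; dcs).
    f_equal. unfold lact, Phi at 2. rewrite !TA by auto. rewrite TI by auto.
    unfold Phi. f_equal. f_equal. f_equal. dcs.
  - unfold Phi. rewrite TA by auto. reflexivity.
Qed.

Lemma bridge x y z :
  tensm (psi x y) (psi (tens x y) z) = tensm (lact s x (psi y z)) (psi x (tens y z))
  <-> comp (tensm (Phi x y) (idm (s z))) (Phi (tens x y) z)
      = comp (tensm (idm (s x)) (Phi y z)) (Phi x (tens y z)).
Proof.
  rewrite bridge_L, bridge_R. rewrite (tA _ HG x y z).
  split; intro H. rewrite H; reflexivity. eapply T_inj; eauto.
Qed.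
End Bridge.

Section Inv.
Variable G : TwoGroupData.
Variable HG : IsStrict2Group G.
Variable I : Type.
Variable m : I -> I -> I.
Variable s : I -> Ob G.
Variable M : I -> I -> Mor G.
Hypothesis Md : forall g h, dom (M g h) = tens (s g) (s h).
Hypothesis Mc : forall g h, cod (M g h) = s (m g h).
Hint Rewrite Md Mc : dcdb.
Lemma inv_cocycle g h k :
  comp (M (m g h) k) (tensm (M g h) (idm (s k)))
  = comp (M g (m h k)) (tensm (idm (s g)) (M h k)) ->
  comp (tensm (minv (M g h)) (idm (s k))) (minv (M (m g h) k))
  = comp (tensm (idm (s g)) (minv (M h k))) (minv (M g (m h k))).
Proof.
  intro H. apply (f_equal minv) in H.
  rewrite !minv_comp in H by dcs. rewrite !minv_T, !minv_id in H by auto. exact H.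
Qed.
End Inv.

Section Iso.
Variable G : TwoGroupData.
Variable HG : IsStrict2Group G.
Lemma iso_refl (x : Ob G) : iso x x.
Proof. exists (idm x); split; dcs. Qed.
Lemma iso_sym (x y : Ob G) : iso x y -> iso y x.
Proof. intros [f [H1 H2]]; exists (minv f); split; dcs. Qed.
Lemma iso_trans (x y z : Ob G) : iso x y -> iso y z -> iso x z.
Proof. intros [f [H1 H2]] [g [H3 H4]]; exists (comp g f); split; dcs. Qed.
Lemma iso_tens (x x' y y' : Ob G) : iso x x' -> iso y y' -> iso (tens x y) (tens x' y').
Proof. intros [f [H1 H2]] [g [H3 H4]]; exists (tensm f g); split; dcs. Qed.
Lemma cii (x : Ob G) : comp (idm x) (idm x) = idm x.
Proof. apply cid_l'; dcs. Qed.
End Iso.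

Section Back.
Variable G : TwoGroupData.
Variable HG : IsStrict2Group G.
Local Notation e := (unit G).
Variable s : Ob G -> Ob G.
Variable Ph : Ob G -> Ob G -> Mor G.
Hypothesis s_iso : forall x y, iso x y -> s x = s y.
Hypothesis s_sec : forall x, iso (s x) x.
Hypothesis s_e : s e = e.
Hypothesis Ph_iso : forall x x' y y', iso x y -> iso x' y' -> Ph x x' = Ph y y'.
Hypothesis Phd : forall x y, dom (Ph x y) = s (tens x y).
Hypothesis Phc : forall x y, cod (Ph x y) = tens (s x) (s y).
Hypothesis Ph_el : forall x, Ph e x = idm (s x).
Hypothesis Ph_er : forall x, Ph x e = idm (s x).
Hypothesis Ph_C : forall x y z,
  comp (tensm (Ph x y) (idm (s z))) (Ph (tens x y) z)
  = comp (tensm (idm (s x)) (Ph y z)) (Ph x (tens y z)).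
Hint Rewrite Phd Phc : dcdb.

Lemma ss x : s (s x) = s x. Proof. apply s_iso, s_sec. Qed.
Hint Rewrite ss : objdb.
Lemma sTl x y : s (tens (s x) y) = s (tens x y).
Proof. apply s_iso, iso_tens; auto using iso_refl. Qed.
Lemma sTr x y : s (tens x (s y)) = s (tens x y).
Proof. apply s_iso, iso_tens; auto using iso_refl. Qed.
Lemma Ph_s x y : Ph (s x) (s y) = Ph x y.
Proof. apply Ph_iso; apply s_sec. Qed.

Definition k0 (x : Ob G) : Mor G := proj1_sig (constructive_indefinite_description _ (s_sec x)).
Lemma k0d x : dom (k0 x) = s x.
Proof. unfold k0; destruct (constructive_indefinite_description _ _) as [f [H1 H2]]; exact H1. Qed.
Lemma k0c x : cod (k0 x) = x.
Proof. unfold k0; destruct (constructive_indefinite_description _ _) as [f [H1 H2]]; exact H2. Qed.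
Hint Rewrite k0d k0c : dcdb.
Definition kap x := comp (k0 x) (minv (k0 (s x))).
Lemma kd x : dom (kap x) = s x. Proof. unfold kap; dcs. Qed.
Lemma kc x : cod (kap x) = x. Proof. unfold kap; dcs. Qed.
Hint Rewrite kd kc : dcdb.
Lemma k_fix x : s x = x -> kap x = idm x.
Proof. intro H. unfold kap. rewrite H, Vr, k0c; auto. Qed.
Lemma k_e : kap e = idm e. Proof. apply k_fix, s_e. Qed.

(* the group pi_0 *)
Definition Grc := {x : Ob G | s x = x}.
Definition toGr (x : Ob G) : Grc := exist _ (s x) (ss x).
Lemma Gr_eq (g h : Grc) : proj1_sig g = proj1_sig h -> g = h.
Proof. destruct g, h; simpl; intros ->; f_equal; apply proof_irrelevance. Qed.
Lemma toGr_val g : toGr (proj1_sig g) = g.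
Proof. apply Gr_eq; destruct g; simpl; auto. Qed.
Lemma toGr_iso x y : iso x y -> toGr x = toGr y.
Proof. intro; apply Gr_eq; simpl; auto. Qed.
Definition grmul (g h : Grc) := toGr (tens (proj1_sig g) (proj1_sig h)).
Definition grone := toGr e.
Definition grinv (g : Grc) := toGr (oinv (proj1_sig g)).
Lemma grmul_toGr x y : grmul (toGr x) (toGr y) = toGr (tens x y).
Proof. apply Gr_eq; simpl. rewrite sTl, sTr; auto. Qed.
Lemma grA x y z : grmul x (grmul y z) = grmul (grmul x y) z.
Proof.
  rewrite <- (toGr_val x), <- (toGr_val y), <- (toGr_val z), !grmul_toGr, tA; auto.
Qed.
Lemma gr1l x : grmul grone x = x.
Proof. apply Gr_eq; destruct x as [x Hx]; simpl. rewrite s_e, tUl; auto. Qed.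
Lemma gr1r x : grmul x grone = x.
Proof. apply Gr_eq; destruct x as [x Hx]; simpl. rewrite s_e, tUr; auto. Qed.
Lemma grVl x : grmul (grinv x) x = grone.
Proof. apply Gr_eq; destruct x as [x Hx]; simpl. rewrite sTl, tVl; auto. Qed.
Lemma grVr x : grmul x (grinv x) = grone.
Proof. apply Gr_eq; destruct x as [x Hx]; simpl. rewrite sTr, tVr; auto. Qed.

Definition Gr : Group :=
  {| gcar := Grc; gmul := grmul; gone := grone; ginv := grinv;
     gmulA := grA; gmul1l := gr1l; gmul1r := gr1r; gmulVl := grVl; gmulVr := grVr |}.

(* the module pi_1 *)
Definition Ac := {f : Mor G | dom f = e /\ cod f = e}.
Definition toA (f : Mor G) : Ac :=
  match excluded_middle_informative (dom f = e /\ cod f = e) with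
  | left p => exist _ f p
  | right _ => exist _ (idm e) (conj (dI _ HG e) (cI _ HG e))
  end.
Lemma toA_val f : dom f = e -> cod f = e -> proj1_sig (toA f) = f.
Proof. intros. unfold toA; destruct excluded_middle_informative; simpl; tauto. Qed.
Lemma A_eq (a b : Ac) : proj1_sig a = proj1_sig b -> a = b.
Proof. destruct a, b; simpl; intros ->; f_equal; apply proof_irrelevance. Qed.
Lemma ad (a : Ac) : dom (proj1_sig a) = e. Proof. exact (proj1 (proj2_sig a)). Qed.
Lemma ac (a : Ac) : cod (proj1_sig a) = e. Proof. exact (proj2 (proj2_sig a)). Qed.
Hint Rewrite ad ac : dcdb.

Definition cj (x : Ob G) (f : Mor G) := tensm (tensm (idm x) f) (idm (oinv x)).
Lemma cjd x f : dom (cj x f) = tens x (tens (dom f) (oinv x)). Proof. unfold cj; dcs. Qed.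
Lemma cjc x f : cod (cj x f) = tens x (tens (cod f) (oinv x)). Proof. unfold cj; dcs. Qed.
Hint Rewrite cjd cjc : dcdb.

Definition aadd (a b : Ac) := toA (comp (proj1_sig a) (proj1_sig b)).
Definition azero := toA (idm e).
Definition aopp (a : Ac) := toA (minv (proj1_sig a)).
Definition aact (g : Grc) (a : Ac) := toA (cj (proj1_sig g) (proj1_sig a)).
Lemma vadd a b : proj1_sig (aadd a b) = comp (proj1_sig a) (proj1_sig b).
Proof. apply toA_val; dcs. Qed.
Lemma vzero : proj1_sig azero = idm e. Proof. apply toA_val; dcs. Qed.
Lemma vopp a : proj1_sig (aopp a) = minv (proj1_sig a). Proof. apply toA_val; dcs. Qed.
Lemma vact g a : proj1_sig (aact g a) = cj (proj1_sig g) (proj1_sig a).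
Proof. apply toA_val; dcs. Qed.

Lemma cj_comp x a b : dom a = e -> cod a = e -> dom b = e -> cod b = e ->
  cj x (comp a b) = comp (cj x a) (cj x b).
Proof.
  intros. unfold cj. rewrite <- !TC by dcs. rewrite !cii by auto. reflexivity.
Qed.
Lemma cj_e a : cj e a = a.
Proof. unfold cj. tn. reflexivity. Qed.
Lemma cj_tens x y a : cj (tens x y) a = cj x (cj y a).
Proof. unfold cj. tn. reflexivity. Qed.
Lemma cj_iso x y a : iso x y -> dom a = e -> cod a = e -> cj x a = cj y a.
Proof.
  intros [phi [H1 H2]] Ha1 Ha2.
  set (rho := tensm (tensm (idm (oinv y)) (minv phi)) (idm (oinv x))).
  assert (rd : dom rho = oinv x) by (unfold rho; dcs).
  assert (rc : cod rho = oinv y) by (unfold rho; dcs).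
  set (c := tensm phi rho).
  assert (E1 : tensm (tensm phi a) rho = comp c (cj x a)).
  { unfold c, cj. replace (tensm phi rho) with (tensm (tensm phi (idm e)) rho) by (rewrite TUr; auto).
    rewrite <- !TC by dcs. rewrite cid_r', cid_l', cid_r' by dcs. reflexivity. }
  assert (E2 : tensm (tensm phi a) rho = comp (cj y a) c).
  { unfold c, cj. replace (tensm phi rho) with (tensm (tensm phi (idm e)) rho) by (rewrite TUr; auto).
    rewrite <- !TC by dcs. rewrite cid_l', cid_r', cid_l' by dcs. reflexivity. }
  assert (cd : dom c = e) by (unfold c; dcs).
  assert (cc : cod c = e) by (unfold c; dcs).
  apply (comp_inj_l _ HG _ _ c); try dcs.
  rewrite <- E1, E2. apply EH; auto; dcs.
Qed.

Lemma aA a b c : aadd a (aadd b c) = aadd (aadd a b) c.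
Proof. apply A_eq. rewrite !vadd. apply cA; dcs. Qed.
Lemma aC a b : aadd a b = aadd b a.
Proof. apply A_eq. rewrite !vadd. apply EH; dcs. Qed.
Lemma a0 a : aadd a azero = a.
Proof. apply A_eq. rewrite vadd, vzero. apply cid_r'; dcs. Qed.
Lemma aN a : aadd a (aopp a) = azero.
Proof. apply A_eq. rewrite vadd, vopp, vzero, Vr by auto. f_equal; dcs. Qed.
Lemma actD' g a b : aact g (aadd a b) = aadd (aact g a) (aact g b).
Proof. apply A_eq. rewrite !vadd, !vact, vadd. apply cj_comp; dcs. Qed.
Lemma act1' a : aact grone a = a.
Proof. apply A_eq. rewrite vact. simpl. rewrite s_e. apply cj_e. Qed.
Lemma actM' g h a : aact (grmul g h) a = aact g (aact h a).
Proof.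
  apply A_eq. rewrite !vact. simpl. rewrite (cj_iso _ (tens (proj1_sig g) (proj1_sig h))) by (auto; dcs).
  apply cj_tens.
Qed.

Definition Am : GModule Gr :=
  @Build_GModule Gr Ac aadd azero aopp aA aC a0 aN aact actD' act1' actM'.


Definition E := @elementary Gr Am.
Definition ktil (f : Mor G) := comp (minv (kap (cod f))) (comp f (kap (dom f))).
Lemma ktd f : dom (ktil f) = s (dom f). Proof. unfold ktil; dcs. Qed.
Lemma ktc f : cod (ktil f) = s (cod f). Proof. unfold ktil; dcs. Qed.
Hint Rewrite ktd ktc : dcdb.
Lemma s_df f : s (cod f) = s (dom f).
Proof. symmetry; apply s_iso. exists f; auto. Qed.
Hint Rewrite s_df : objdb.
Definition red (u : Mor G) : Ac := toA (tensm u (idm (oinv (dom u)))).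
Lemma vred u : cod u = dom u -> proj1_sig (red u) = tensm u (idm (oinv (dom u))).
Proof. intro. apply toA_val; dcs. Qed.
Lemma Tred u P : cod u = dom u -> dom u = P -> tensm (proj1_sig (red u)) (idm P) = u.
Proof. intros H1 H2. rewrite vred by auto. subst. tn. reflexivity. Qed.
Lemma Tcomp a b P : dom a = e -> cod a = e -> dom b = e -> cod b = e ->
  tensm (comp a b) (idm P) = comp (tensm a (idm P)) (tensm b (idm P)).
Proof. intros. rewrite <- TC by dcs. rewrite cii; auto. Qed.
Lemma Tcentral a m : dom a = e -> cod a = e ->
  tensm a (idm (dom m)) = comp (minv m) (comp (tensm a (idm (cod m))) m).
Proof. intros. rewrite central by auto. rewrite Vl' by dcs. reflexivity. Qed.

Definition nu x y := comp (minv (kap (tens x y))) (comp (tensm (kap x) (kap y)) (Ph x y)).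
Lemma nud x y : dom (nu x y) = s (tens x y). Proof. unfold nu; dcs. Qed.
Lemma nuc x y : cod (nu x y) = s (tens x y). Proof. unfold nu; dcs. Qed.
Hint Rewrite nud nuc : dcdb.

Arguments toA : simpl never.
Arguments toGr : simpl never.
Arguments red : simpl never.

Definition Fd : MonFunData G E :=
  @Build_MonFunData G E toGr
    (fun f : Mor G => ((red (ktil f), toGr (dom f)) : Mor E))
    (fun x y => ((red (nu x y), toGr (tens x y)) : Mor E))
    ((azero, grone) : Mor E).
Definition Fd' : MonFunData E G :=
  @Build_MonFunData E G (fun g : Grc => proj1_sig g)
    (fun p : Mor E => tensm (proj1_sig (fst p : Ac)) (idm (proj1_sig (snd p : Grc))))
    (fun g h : Grc => minv (Ph (proj1_sig g) (proj1_sig h)))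
    (idm e).


Lemma vtoGr x : proj1_sig (toGr x) = s x. Proof. reflexivity. Qed.
Lemma act0 g : aact g azero = azero.
Proof. apply A_eq. rewrite vact, vzero. unfold cj. tn. reflexivity. Qed.
Lemma a0l a : aadd azero a = a.
Proof. rewrite aC. apply a0. Qed.
Lemma A_eqT (a b : Ac) P : tensm (proj1_sig a) (idm P) = tensm (proj1_sig b) (idm P) -> a = b.
Proof. intro H. apply A_eq. eapply T_inj; eauto. Qed.
Lemma Tadd a b P : tensm (proj1_sig (aadd a b)) (idm P)
  = comp (tensm (proj1_sig a) (idm P)) (tensm (proj1_sig b) (idm P)).
Proof. rewrite vadd. apply Tcomp; dcs. Qed.
Lemma red_id x : red (idm x) = azero.
Proof. apply A_eq. rewrite vzero, vred by dcs. tn. reflexivity. Qed.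
Lemma ktil_id x : ktil (idm x) = idm (s x).
Proof. unfold ktil. rewrite dI, cI by auto. rewrite cid_l' by dcs. rewrite Vl by auto. f_equal; dcs. Qed.
Lemma ktil_comp f g : cod f = dom g -> ktil (comp g f) = comp (ktil g) (ktil f).
Proof.
  intro H. unfold ktil. rewrite dC, cC by auto. cra. f_equal. f_equal.
  rewrite <- H, Vr' by dcs. reflexivity.
Qed.
Lemma k_ktil f : comp (kap (cod f)) (ktil f) = comp f (kap (dom f)).
Proof. unfold ktil. rewrite Vr' by dcs. reflexivity. Qed.
Lemma Tred2 u Z : cod u = dom u -> tensm (proj1_sig (red u)) (idm (tens (dom u) Z)) = tensm u (idm Z).
Proof. intro. rewrite vred by auto. tn. reflexivity. Qed.
Lemma Tact u g Z W : cod u = dom u -> proj1_sig g = Z -> dom u = W ->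
  tensm (proj1_sig (aact g (red u))) (idm (tens Z W)) = tensm (idm Z) u.
Proof. intros H1 H2 H3. rewrite vact, vred, H2 by auto. subst W. unfold cj. tn. reflexivity. Qed.
Lemma nu_expand x y : nu x y = comp (minv (kap (tens x y))) (comp (tensm (kap x) (kap y)) (Ph x y)).
Proof. reflexivity. Qed.
Lemma Tpair u v g : cod u = dom u -> cod v = dom v -> proj1_sig g = dom u ->
  tensm (proj1_sig (aadd (red u) (aact g (red v)))) (idm (tens (dom u) (dom v))) = tensm u v.
Proof.
  intros H1 H2 H3. rewrite Tadd, Tact by auto. rewrite Tred2 by auto.
  rewrite (whl _ HG u v), H2. reflexivity.
Qed.
Lemma k_nu x y : comp (kap (tens x y)) (nu x y) = comp (tensm (kap x) (kap y)) (Ph x y).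
Proof. unfold nu. rewrite Vr' by dcs. reflexivity. Qed.

Lemma F_mon : IsMonFun Fd.
Proof.
  split; cbn.
  - reflexivity.
  - intro f. apply toGr_iso. exists f; auto.
  - intro x. rewrite ktil_id, red_id, dI by auto. reflexivity.
  - intros f g H. rewrite dC by auto. f_equal.
    apply (A_eqT _ _ (s (dom f))).
    rewrite Tadd. rewrite !Tred; try dcs.
    1: apply ktil_comp; auto.
    all: rewrite ?ktd, ?ktc, ?dC, ?cC by auto; rewrite <- ?H; autorewrite with objdb; rewrite <- ?H; autorewrite with objdb; reflexivity.
  - intros; symmetry; apply grmul_toGr.
  - reflexivity.
  - intros f g. rewrite grmul_toGr. f_equal.
    apply (A_eqT _ _ (dom (Ph (dom f) (dom g)))).
    rewrite !Tadd.
    rewrite (Tred (nu (dom f) (dom g))) by dcs.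
    rewrite (Tred (ktil (tensm f g))); [ | rewrite ktc, ktd, s_df; auto | rewrite ktd, Phd, dT; auto].
    rewrite (Tred (nu (cod f) (cod g))); [ | dcs | rewrite nud, Phd, <- (cT _ HG f g), s_df, dT; auto].
    rewrite <- Tadd.
    rewrite (Tcentral _ (Ph (dom f) (dom g))) by dcs.
    rewrite Phc, <- (ktd f), <- (ktd g).
    rewrite Tpair; try (rewrite ?ktc, ?ktd, ?s_df; reflexivity).
    unfold nu. rewrite (Ph_iso (cod f) (cod g) (dom f) (dom g)) by (apply (iso_sym _ HG); first [exists f; split; reflexivity | exists g; split; reflexivity]).
    unfold ktil at 3. rewrite dT, cT by auto.
    cra. rewrite Vr' by dcs. f_equal.
    rewrite (cA _ HG (Ph (dom f) (dom g))) by dcs.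
    rewrite <- TC by dcs. rewrite !k_ktil.
    rewrite (cA _ HG (Ph (dom f) (dom g))) by dcs.
    cra. rewrite Vr' by dcs. rewrite (cA _ HG (Ph (dom f) (dom g))) by dcs. rewrite <- TC by dcs. reflexivity.
  - reflexivity.
  - reflexivity.
  - intros x y z. rewrite !grmul_toGr, tA by auto. f_equal.
    rewrite !act0, a0, a0l.
    apply (A_eqT _ _ (s (tens x (tens y z)))).
    rewrite !Tadd.
    rewrite (Tred (nu (tens x y) z)) by (dcs; rewrite tA; auto).
    rewrite (Tred (nu x (tens y z))) by dcs.
    replace (s (tens x (tens y z))) with (dom (Ph (tens x y) z)) at 1 by (rewrite Phd, tA; auto).
    rewrite (Tcentral _ (Ph (tens x y) z)) by dcs.
    replace (s (tens x (tens y z))) with (dom (Ph x (tens y z))) by (rewrite Phd; auto).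
    rewrite (Tcentral _ (Ph x (tens y z))) by dcs.
    rewrite !Phc.
    replace (s (tens x y)) with (dom (nu x y)) at 1 by (rewrite nud; auto).
    rewrite Tred2 by dcs.
    rewrite (Tact (nu y z) (toGr x) (s x) (s (tens y z))) by (auto; dcs).
    rewrite (nu_expand (tens x y) z), (nu_expand x (tens y z)).
    cra. rewrite !Vr' by dcs.
    rewrite !TC' by dcs. rewrite !k_nu.
    rewrite (cid_r' _ HG (kap z)), (cid_r' _ HG (kap x)) by dcs.
    rewrite (tA _ HG x y z). f_equal.
    transitivity (comp (tensm (tensm (kap x) (kap y)) (kap z)) (comp (tensm (Ph x y) (idm (s z))) (Ph (tens x y) z))).
    { rewrite TC' by dcs. rewrite cid_r' by dcs. reflexivity. }
    rewrite Ph_C. rewrite TA by auto. rewrite TC' by dcs. rewrite cid_r' by dcs. reflexivity.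
  - intro x. rewrite act0, a0l, a0, gr1l. f_equal.
    rewrite nu_expand, (tUl _ HG x), Ph_el, k_e, TUl by auto.
    rewrite cid_r', Vl, red_id by dcs. reflexivity.
  - intro x. rewrite act0, a0l, a0, gr1r. f_equal.
    rewrite nu_expand, (tUr _ HG x), Ph_er, k_e, TUr by auto.
    rewrite cid_r', Vl, red_id by dcs. reflexivity.
Qed.

Lemma gfix (g : Grc) : s (proj1_sig g) = proj1_sig g. Proof. exact (proj2_sig g). Qed.
Lemma vgrmul g h : proj1_sig (grmul g h) = s (tens (proj1_sig g) (proj1_sig h)). Proof. reflexivity. Qed.
Lemma vgrone : proj1_sig grone = e. Proof. exact s_e. Qed.
Hint Rewrite gfix vgrmul vgrone vtoGr : objdb.
Lemma Ph_sl a b : Ph (s a) b = Ph a b. Proof. apply Ph_iso; auto using iso_refl. Qed.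
Lemma Ph_sr a b : Ph a (s b) = Ph a b. Proof. apply Ph_iso; auto using iso_refl. Qed.
Lemma Tpair' a b g Y : tensm (tensm (proj1_sig a) (idm (proj1_sig g))) (tensm (proj1_sig b) (idm Y))
  = tensm (proj1_sig (aadd a (aact g b))) (idm (tens (proj1_sig g) Y)).
Proof.
  rewrite Tadd, vact. unfold cj. tn.
  rewrite (Kl _ HG (proj1_sig a)) by dcs. f_equal. f_equal. f_equal. dcs.
Qed.

Lemma F'_mon : IsMonFun Fd'.
Proof.
  split; cbn.
  - intros [a g]; simpl; dcs.
  - intros [a g]; simpl; dcs.
  - intro; rewrite vzero; tn; reflexivity.
  - intros [a g] [b h] H; simpl in *; subst h; rewrite vadd. apply Tcomp; dcs.
  - intros; dcs.
  - intros; dcs.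
  - intros [a g] [b h]; simpl.
    rewrite <- (Phd (proj1_sig g) (proj1_sig h)), <- (cV _ HG (Ph _ _)).
    rewrite central by dcs. f_equal. rewrite dV, Phc, !gfix by auto. apply Tpair'.
  - dcs.
  - dcs.
  - intros x y z. rewrite !vgrmul, Ph_sl, Ph_sr.
    pose proof (Ph_C (proj1_sig x) (proj1_sig y) (proj1_sig z)) as H.
    apply (f_equal minv) in H. rewrite !minv_comp in H by dcs.
    rewrite !minv_T, !minv_id, !gfix in H by auto. exact H.
  - intro x. rewrite vgrone, Ph_el, minv_id, TUl, gfix, cii by auto. reflexivity.
  - intro x. rewrite vgrone, Ph_er, minv_id, TUr, gfix, cii by auto. reflexivity.
Qed.

Lemma nat_a : IsMonNat (mfcomp Fd Fd') (mfid G) kap.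
Proof.
  split; cbn.
  - intro; dcs.
  - intro; dcs.
  - intro f. rewrite vtoGr, (Tred (ktil f)) by dcs. apply k_ktil.
  - intros x y. rewrite !vtoGr, Ph_s, (Tred (nu x y)) by dcs.
    rewrite cA by dcs. rewrite k_nu. rewrite <- cA by dcs. rewrite Vr by auto.
    rewrite cid_r', cid_l' by dcs. reflexivity.
  - rewrite k_e, vzero, vgrone. tn. rewrite !cii by auto. reflexivity.
Qed.
Lemma red_T1 a (g : Grc) : red (ktil (tensm (proj1_sig a) (idm (proj1_sig g)))) = a.
Proof.
  unfold ktil. rewrite dT, cT, ad, ac, dI, cI, !tUl, (k_fix (proj1_sig g)), minv_id by (auto using gfix).
  rewrite cid_l', cid_r' by dcs. apply A_eq. rewrite vred by dcs. tn. reflexivity.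
Qed.
Lemma nat_b : IsMonNat (mfcomp Fd' Fd) (mfid E) (fun g : Grc => ((azero, g) : Mor E)).
Proof.
  split; cbn.
  - intro; symmetry; apply toGr_val.
  - reflexivity.
  - intros [a g]; simpl. f_equal.
    + rewrite a0l, a0. apply red_T1.
    + rewrite dT, ad, dI, tUl by auto. apply toGr_val.
  - intros x y. f_equal.
    rewrite act0, !a0l.
    apply (A_eqT _ _ (s (tens (proj1_sig x) (proj1_sig y)))).
    rewrite Tadd. rewrite !Tred by (unfold ktil; dcs).
    unfold ktil, nu. rewrite dV, cV, Phd, Phc, !gfix by auto.
    rewrite (k_fix (s (tens (proj1_sig x) (proj1_sig y)))) by (apply ss).
    rewrite (k_fix (proj1_sig x)), (k_fix (proj1_sig y)) by (apply gfix).
    rewrite minv_id, TI by auto.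
    rewrite cid_l' by dcs. rewrite (cid_l' _ HG (Ph _ _)) by dcs.
    rewrite <- cA by dcs. rewrite Vr' by dcs. rewrite Vl by auto. rewrite vzero. tn. reflexivity.
  - f_equal. rewrite ktil_id, red_id, !a0. reflexivity.
Qed.

Lemma back_split : is_split G.
Proof.
  exists Gr, Am, Fd, Fd'. split; [apply F_mon|]. split; [apply F'_mon|].
  split; [exists kap; apply nat_a | exists (fun g : Grc => ((azero, g) : Mor E)); apply nat_b].
Qed.

End Back.

Section Fwd.
Variable G : TwoGroupData.
Variable HG : IsStrict2Group G.
Local Notation e := (unit G).
Variable Gr : Group.
Variable Am : GModule Gr.
Let E := @elementary Gr Am.
Variable F : MonFunData G E.
Variable F' : MonFunData E G.
Variable a : Ob G -> Mor G.
Hypothesis HF : IsMonFun F.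
Hypothesis HF' : IsMonFun F'.
Hypothesis Ha : IsMonNat (mfcomp F F') (mfid G) a.

Lemma F_dc (f : Mor G) : fo F (dom f) = fo F (cod f).
Proof. pose proof (mf_dom HF f). pose proof (mf_cod HF f). simpl in *. congruence. Qed.
Lemma F_iso x y : iso x y -> fo F x = fo F y.
Proof. intros [f [<- <-]]. apply F_dc. Qed.
Lemma FT x y : fo F (tens x y) = gmul Gr (fo F x) (fo F y).
Proof. pose proof (mf_mu_dom HF x y). pose proof (mf_mu_cod HF x y). simpl in *. congruence. Qed.
Lemma Fe : fo F e = gone Gr.
Proof.
  pose proof (FT e e) as H. rewrite (tUl _ HG) in H.
  rewrite <- (gmul1l Gr (fo F e)) at 1. rewrite <- (gmulVl Gr (fo F e)) at 1.
  rewrite <- gmulA, <- H. apply gmulVl.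
Qed.

Definition u := fo F' (gone Gr).
Definition ep := feps F'.
Lemma epd : dom ep = e. Proof. apply (mf_eps_dom HF'). Qed.
Lemma epc : cod ep = u. Proof. apply (mf_eps_cod HF'). Qed.
Definition mu (g h : gcar Gr) : Mor G := fmu F' g h.
Lemma mud g h : dom (mu g h) = tens (fo F' g) (fo F' h). Proof. apply (mf_mu_dom HF'). Qed.
Lemma muc g h : cod (mu g h) = fo F' (gmul Gr g h). Proof. apply (mf_mu_cod HF'). Qed.
Hint Rewrite epd epc mud muc : dcdb.

Definition sg (g : gcar Gr) := tens (fo F' g) (oinv u).
Definition th (g : gcar Gr) := tensm (idm (fo F' g)) (tensm (idm (oinv u)) ep).
Lemma thd g : dom (th g) = sg g. Proof. unfold th, sg; dcs. Qed.
Lemma thc g : cod (th g) = fo F' g. Proof. unfold th; dcs. Qed.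
Hint Rewrite thd thc : dcdb.
Definition M g h := comp (minv (th (gmul Gr g h))) (comp (mu g h) (tensm (th g) (th h))).
Lemma Md g h : dom (M g h) = tens (sg g) (sg h). Proof. unfold M; dcs. Qed.
Lemma Mc g h : cod (M g h) = sg (gmul Gr g h). Proof. unfold M; dcs. Qed.
Hint Rewrite Md Mc : dcdb.

Lemma M_L g h k : comp (M (gmul Gr g h) k) (tensm (M g h) (idm (sg k)))
  = comp (minv (th (gmul Gr (gmul Gr g h) k)))
      (comp (comp (mu (gmul Gr g h) k) (tensm (mu g h) (idm (fo F' k))))
            (tensm (tensm (th g) (th h)) (th k))).
Proof.
  unfold M. cra. rewrite <- TC by dcs. rewrite Vr' by dcs. rewrite cid_r' by dcs.
  f_equal. f_equal. rewrite <- TC by dcs. rewrite cid_l' by dcs. reflexivity.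
Qed.
Lemma M_R g h k : comp (M g (gmul Gr h k)) (tensm (idm (sg g)) (M h k))
  = comp (minv (th (gmul Gr g (gmul Gr h k))))
      (comp (comp (mu g (gmul Gr h k)) (tensm (idm (fo F' g)) (mu h k)))
            (tensm (th g) (tensm (th h) (th k)))).
Proof.
  unfold M. cra. rewrite <- TC by dcs. rewrite Vr' by dcs. rewrite cid_r' by dcs.
  f_equal. f_equal. rewrite <- TC by dcs. rewrite cid_l' by dcs. reflexivity.
Qed.
Lemma M_C g h k : comp (M (gmul Gr g h) k) (tensm (M g h) (idm (sg k)))
  = comp (M g (gmul Gr h k)) (tensm (idm (sg g)) (M h k)).
Proof.
  rewrite M_L, M_R, gmulA, TA by auto. f_equal. f_equal.
  pose proof (mf_assoc HF' g h k) as H. simpl in H. unfold mu. rewrite H. reflexivity.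
Qed.

Lemma th1 : th (gone Gr) = ep.
Proof. unfold th. tn. reflexivity. Qed.
Lemma M1l h : M (gone Gr) h = idm (sg h).
Proof.
  unfold M. rewrite (gmul1l Gr h), th1.
  rewrite (Kl _ HG ep (th h)) by dcs. rewrite thc.
  rewrite (cA _ HG (th h) (tensm ep (idm (fo F' h))) (mu (gone Gr) h)) by dcs.
  pose proof (mf_unit_l HF' h) as H. simpl in H. unfold mu, ep. rewrite H.
  rewrite cid_l' by dcs. rewrite Vl by auto. rewrite thd. reflexivity.
Qed.
Lemma M1r h : M h (gone Gr) = idm (sg h).
Proof.
  unfold M. rewrite (gmul1r Gr h), th1.
  rewrite (Kr _ HG (th h) ep) by dcs. rewrite thc.
  rewrite (cA _ HG (th h) (tensm (idm (fo F' h)) ep) (mu h (gone Gr))) by dcs.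
  pose proof (mf_unit_r HF' h) as H. simpl in H. unfold mu, ep. rewrite H.
  rewrite cid_l' by dcs. rewrite Vl by auto. rewrite thd. reflexivity.
Qed.

Definition Phg g h := minv (M g h).
Lemma Phg_C g h k : comp (tensm (Phg g h) (idm (sg k))) (Phg (gmul Gr g h) k)
  = comp (tensm (idm (sg g)) (Phg h k)) (Phg g (gmul Gr h k)).
Proof. apply (inv_cocycle G HG _ (gmul Gr) sg M Md Mc), M_C. Qed.

Definition s0 x := sg (fo F x).
Definition psi0 x y := tensm (Phg (fo F x) (fo F y)) (idm (oinv (sg (gmul Gr (fo F x) (fo F y))))).
Lemma ad' x : dom (a x) = fo F' (fo F x). Proof. apply (mn_dom Ha). Qed.
Lemma ac' x : cod (a x) = x. Proof. apply (mn_cod Ha). Qed.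
Hint Rewrite ad' ac' : dcdb.
Lemma psid x y : dom (psi0 x y) = e. Proof. unfold psi0, Phg. dcs. Qed.
Lemma psic x y : cod (psi0 x y) = tens (tens (s0 x) (s0 y)) (oinv (s0 (tens x y))).
Proof. unfold psi0, Phg, s0. rewrite FT. dcs. Qed.
Lemma PhiE x y : Phi G s0 psi0 x y = Phg (fo F x) (fo F y).
Proof. unfold Phi, psi0, s0. rewrite FT. tn. reflexivity. Qed.

Lemma fwd : exists (s : Ob G -> Ob G) (psi : Ob G -> Ob G -> Mor G),
    (forall x y : Ob G, iso x y -> s x = s y) /\
    (forall x : Ob G, iso (s x) x) /\
    s (unit G) = unit G /\
    (forall x x' y y' : Ob G, iso x y -> iso x' y' -> psi x x' = psi y y') /\
    (forall x x' : Ob G, dom (psi x x') = unit G /\ cod (psi x x') = shat s x x') /\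
    (forall x : Ob G, psi (unit G) x = idm (unit G) /\ psi x (unit G) = idm (unit G)) /\
    (forall x x' x'' : Ob G,
        tensm (psi x x') (psi (tens x x') x'')
        = tensm (lact s x (psi x' x'')) (psi x (tens x' x''))).
Proof.
  exists s0, psi0. refine (conj _ (conj _ (conj _ (conj _ (conj _ (conj _ _)))))).
  - intros x y H. unfold s0. rewrite (F_iso x y H). reflexivity.
  - intro x. exists (comp (a x) (th (fo F x))). split; dcs.
  - unfold s0, sg. rewrite Fe. fold u. apply tVr; auto.
  - intros x x' y y' H H'. unfold psi0. rewrite (F_iso x y H), (F_iso x' y' H'). reflexivity.
  - intros x y. split; [apply psid | apply psic].
  - intro x. unfold psi0, Phg. rewrite Fe, M1l, M1r, (gmul1l Gr), (gmul1r Gr), minv_id by auto.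
    split; tn; reflexivity.
  - intros x y z. apply (proj2 (bridge G HG s0 psi0 psid psic x y z)).
    rewrite !PhiE, !FT. unfold s0. apply Phg_C.
Qed.

End Fwd.

Theorem theorem3p19 (G : TwoGroupData) (HG : IsStrict2Group G) :
  is_split G <->
  exists (s : Ob G -> Ob G) (psi : Ob G -> Ob G -> Mor G),
    (* s is a well-defined map pi_0(G) -> G_0 ... *)
    (forall x y : Ob G, iso x y -> s x = s y) /\
    (* ... which is a section of p ... *)
    (forall x : Ob G, iso (s x) x) /\
    (* ... and is normalized *)
    s (unit G) = unit G /\
    (* psi is a well-defined map pi_0(G) x pi_0(G) -> H_0 ... *)
    (forall x x' y y' : Ob G, iso x y -> iso x' y' -> psi x x' = psi y y') /\
    (* ... lifting s_hat (morphisms e -> s_hat([x],[x'])) ... *)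
    (forall x x' : Ob G, dom (psi x x') = unit G /\ cod (psi x x') = shat s x x') /\
    (* ... normalized ... *)
    (forall x : Ob G, psi (unit G) x = idm (unit G) /\ psi x (unit G) = idm (unit G)) /\
    (* ... and satisfying the cocycle condition *)
    (forall x x' x'' : Ob G,
        tensm (psi x x') (psi (tens x x') x'')
        = tensm (lact s x (psi x' x'')) (psi x (tens x' x''))).
Proof.
  split.
  - intros [Gr [Am [F [F' [HF [HF' [[a Ha] _]]]]]]]. eapply fwd; eauto.
  - intros [s [psi [H1 [H2 [H3 [H4 [H5 [H6 H7]]]]]]]].
    assert (pd : forall x y, dom (psi x y) = unit G) by (intros; apply H5).
    assert (pc : forall x y, cod (psi x y) = tens (tens (s x) (s y)) (oinv (s (tens x y))))
      by (intros; apply H5).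
    apply (back_split G HG s (Phi G s psi)); auto.
    + intros x x' y y' Hx Hy. unfold Phi.
      rewrite (H4 x x' y y' Hx Hy), (H1 (tens x x') (tens y y')) by (apply iso_tens; auto).
      reflexivity.
    + intros x y. unfold Phi. rewrite dT, dI, pd, tUl by auto. reflexivity.
    + intros x y. unfold Phi. rewrite cT, cI, pc by auto. tn. reflexivity.
    + intro x. unfold Phi. rewrite (proj1 (H6 x)), tUl, TUl by auto. reflexivity.
    + intro x. unfold Phi. rewrite (proj2 (H6 x)), tUr, TUl by auto. reflexivity.
    + intros x y z. apply (proj1 (bridge G HG s psi pd pc x y z)). apply H7.
Qed.
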